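(* Let $a,b$ be integers with $0<b<a$, let $S=\langle a,a+1,\ldots,a+b\rangle$ with conductor $c$, and let $m\ge 2c-1$. If $M$ is an $(S,m,r)$-amenable set, then $M+1=\{x+1\mid x\in M\}$ is an $(S,m+1,r)$-amenable set.
   Context: For $x\in S$, $\mathrm D(x)=\{\alpha\in S\mid x-\alpha\in S\}$. The conductor $c$ is the least element of $S$ with $c+n\in S$ for all $n\in\mathbb N$. For $m\ge 2c-1$, a set $M=\{m_1<\cdots<m_r\}\subseteq S$ with $m=m_1$ is $(S,m,r)$-amenable if $\mathrm D(m_i)\cap[m,\infty)\subseteq M$ for all $i$. *)

(* Defs.v *)
From mathcomp Require Import all_boot.
Set Implicit Arguments. Unset Strict Implicit. Unset Printing Implicit Defensive.

Inductive gen_monoid (G : nat -> Prop) : nat -> Prop :=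
  | gm0 : gen_monoid G 0
  | gmS : forall x g, gen_monoid G x -> G g -> gen_monoid G (x + g).

Definition interval_semigroup (a b : nat) : nat -> Prop :=
  gen_monoid (fun g => a <= g <= a + b).

Definition is_conductor (S : nat -> Prop) (c : nat) : Prop :=
  [/\ S c, (forall n, S (c + n)) &
      (forall c', S c' -> (forall n, S (c' + n)) -> c <= c')].

(* alpha \in D(x) : alpha \in S and x - alpha \in S (difference taken in Z,
   so alpha <= x is required). *)
Definition inD (S : nat -> Prop) (x alpha : nat) : Prop :=
  [/\ S alpha, alpha <= x & S (x - alpha)].

Definition amenable (S : nat -> Prop) (m r : nat) (M : seq nat) : Prop :=
  [/\ sorted ltn M, size M = r, 0 < r /\ head 0 M = m,
      (forall x, x \in M -> S x) &
      (forall x alpha, x \in M -> inD S x alpha -> m <= alpha -> alpha \in M)].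

(* Main.v *)
Require Import Defs.
From mathcomp Require Import all_boot.

Lemma gm_ge (a b x : nat) : interval_semigroup a b x -> x = 0 \/ a <= x.
Proof.
elim=> [|y g _ IH /andP[Hg _]]; first by left.
right; exact: leq_trans Hg (leq_addl _ _).
Qed.

Theorem lemma4p20 (a b : nat) (hb : 0 < b) (hba : b < a) (c m r : nat)
  (M : seq nat) :
  is_conductor (interval_semigroup a b) c ->
  2 * c - 1 <= m ->
  amenable (interval_semigroup a b) m r M ->
  amenable (interval_semigroup a b) m.+1 r (map succn M).
Proof.
move=> [Sc Scn Smin] hm [Hs Hsz [Hr Hh] HS HD].
have c1 : 0 < c.
  case: c Sc Scn Smin hm => // _ Scn _ _.
  have := @gm_ge a b 1 (Scn 1); case=> // H.
  have : b < 1 by apply: leq_trans hba H.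
  by rewrite ltnS leqn0 => /eqP Hb; rewrite Hb in hb.
have inS : forall y, c <= y -> interval_semigroup a b y.
  by move=> y Hy; rewrite -(subnKC Hy); apply: Scn.
have cm : c <= m.
  apply: leq_trans hm; rewrite mul2n -addnn -addnBA //; exact: leq_addr.
split.
- rewrite sorted_map; apply: sub_sorted Hs; by [].
- by rewrite size_map.
- split; first by [].
  move: Hr Hh; rewrite -Hsz.
  by case: M {Hsz Hs HS HD} => [|y s] //= _ ->.
- move=> x /mapP[y yM ->]; apply: inS.
  have : c <= y.
    apply: leq_trans cm _.
    case: M Hs Hh yM {Hsz HS HD} => [//|z s] Hs /= Hz.
    rewrite in_cons => /orP[/eqP->|ys]; first by rewrite Hz.
    rewrite -Hz; apply: ltnW.
    have := order_path_min ltn_trans Hs.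
    by move/allP => /(_ y ys).
  by move=> H; apply: leq_trans H _.
- move=> x alpha /mapP[y yM ->] [Sa Hax Sd] Hma.
  have Hpos : alpha = (alpha.-1).+1 by rewrite prednK // (leq_trans _ Hma).
  rewrite Hpos; apply: map_f; apply: (HD y) => //.
  + split.
    * apply: inS; apply: leq_trans cm _; rewrite -ltnS -Hpos; exact: Hma.
    * by rewrite -ltnS -Hpos.
    * by have -> : y - alpha.-1 = y.+1 - alpha by rewrite {2}Hpos subSS.
  + by rewrite -ltnS -Hpos.
Qed.
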